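(* The value function $v$ is decreasing on $[0,\infty)$, satisfies $\frac{\beta u_0-1}{r}\le v(z)\le \frac{\beta u_0}{r}$ for all $z\ge 0$, and $\lim_{z\to\infty} v(z)=\frac{\beta u_0-1}{r}$.
   Context: Let $(\Omega,\mathcal F,\mathbb P)$ be a complete probability space carrying a standard Brownian motion $W=(W(t))_{t\ge0}$. Fix parameters $\mu\in\mathbb R$, $\sigma>0$, a maximal dividend rate $u_0>0$, a discount rate $r>0$, a weight $\beta>0$ and a critical drawdown level $d>0$. Let $\mathcal U$ be the set of adapted processes $U=(U(t))_{t\ge0}$ with $0\le U(t)\le u_0$ for all $t$ (admissible dividend strategies). For $U\in\mathcal U$ put $X^U(t)=\mu t+\sigma W(t)-\int_0^t U(s)\,ds$; for $z\ge0$ put $M_z^U(t)=\max\{z,\sup_{s\in[0,t]}X^U(s)\}$ and $\Delta_z^U(t)=M_z^U(t)-X^U(t)$ (the drawdown process with initial past maximum $z$). Define $v^U(z)=\mathbb E\big[\beta\int_0^\infty e^{-rt}U(t)\,dt-\int_0^\infty e^{-rt}\mathbf 1_{\{\Delta_z^U(t)>d\}}\,dt\big]$ and the value function $v(z)=\sup_{U\in\mathcal U}v^U(z)$, $z\ge0$. *)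

(* Defs.v *)
From HB Require Import structures.
From mathcomp Require Import all_boot all_order all_algebra.
From mathcomp Require Import all_classical all_reals all_analysis.
Set Implicit Arguments. Unset Strict Implicit. Unset Printing Implicit Defensive.
Import Order.TTheory GRing.Theory Num.Theory.
Import numFieldNormedType.Exports.
Local Open Scope classical_set_scope.
Local Open Scope ring_scope.

Section dividend_drawdown.
Context {R : realType} {dO : measure_display} {Omega : measurableType dO}.
Variable P : probability Omega R.

(* Standard Brownian motion W : [0,oo) x Omega -> R (times t < 0 are
   irrelevant): W 0 = 0, continuous paths on [0,oo), each W t a random
   variable, increments W t - W s (0 <= s < t) are N(0, t - s)-distributed,
   and increments over consecutive disjoint intervals are mutually
   independent. *)
Definition std_brownian_motion (W : R -> Omega -> R) : Prop :=
  [/\ (forall w, W 0 w = 0),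
      (forall w, {within `[0, +oo[%classic, continuous (fun t => W t w)}),
      (forall t, 0 <= t -> measurable_fun setT (W t)),
      (forall s t, 0 <= s -> s < t -> forall B : set R, measurable B ->
          P ((fun w => W t w - W s w) @^-1` B)
          = normal_prob 0 (Num.sqrt (t - s)) B) &
      (forall (n : nat) (ts : nat -> R) (B : nat -> set R),
          0 <= ts 0%N -> (forall i, (i < n)%N -> ts i < ts i.+1) ->
          (forall i, measurable (B i)) ->
          P (\bigcap_(i in [set i | (i < n)%N])
               ((fun w => W (ts i.+1) w - W (ts i) w) @^-1` B i))
          = \big[*%E/1%E]_(i < n)
               P ((fun w => W (ts i.+1) w - W (ts i) w) @^-1` B i))].

Definition natural_filtration (W : R -> Omega -> R) (t : R) : set (set Omega) :=
  smallest (sigma_algebra setT)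
    ([set A | exists s (B : set R), [/\ 0 <= s <= t, measurable B &
                                        A = W s @^-1` B]]
     `|` [set N | exists M, [/\ measurable M, P M = 0%E & N `<=` M]]).

Definition admissible (W : R -> Omega -> R) (u0 : R) (U : R -> Omega -> R) : Prop :=
  [/\ (forall t w, 0 <= t -> 0 <= U t w <= u0),
      (forall t, 0 <= t -> forall B : set R, measurable B ->
          natural_filtration W t (U t @^-1` B)) &
      measurable_fun ([set t : R | 0 <= t] `*` [set: Omega])
                     (fun p : R * Omega => U p.1 p.2)].

Definition surplus (W : R -> Omega -> R) (mu sigma : R) (U : R -> Omega -> R)
    (t : R) (w : Omega) : R :=
  mu * t + sigma * W t w - Rintegral lebesgue_measure `[0, t]%classic (fun s => U s w).

(* Running maximum with initial past maximum z. *)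
Definition running_max W mu sigma U (z t : R) (w : Omega) : R :=
  Num.max z (sup [set surplus W mu sigma U s w | s in `[0, t]%classic]).

Definition drawdown W mu sigma U (z t : R) (w : Omega) : R :=
  running_max W mu sigma U z t w - surplus W mu sigma U t w.

Definition performance W mu sigma r beta d U (z : R) : R :=
  Rintegral P setT (fun w =>
    beta * Rintegral lebesgue_measure `[0, +oo[%classic
             (fun t => expR (- (r * t)) * U t w)
    - Rintegral lebesgue_measure `[0, +oo[%classic
             (fun t => expR (- (r * t)) *
                       (if d < drawdown W mu sigma U z t w then 1 else 0))).

Definition value_fn W mu sigma u0 r beta d (z : R) : R :=
  sup [set performance W mu sigma r beta d U z | U in admissible W u0].

End dividend_drawdown.

(* Main.v *)
Require Import Defs.
From HB Require Import structures.
From mathcomp Require Import all_boot all_order all_algebra.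
From mathcomp Require Import all_classical all_reals all_analysis.
From mathcomp Require Import measurable_realfun.
From mathcomp Require Import ring lra.
Import Order.TTheory GRing.Theory Num.Theory.
Import numFieldNormedType.Exports.
Local Open Scope classical_set_scope.
Local Open Scope ring_scope.

Section Aux.
Context {d : measure_display} {T : measurableType d} {R : realType} (mu : {measure set T -> \bar R}).
Local Open Scope ereal_scope.

Lemma nn_le_integral (D1 D2 : set T) (f g : T -> \bar R) :
  (forall x, D1 x -> 0 <= f x) -> (forall x, D2 x -> 0 <= g x) ->
  (forall x, D1 x -> D2 x /\ f x <= g x) ->
  \int[mu]_(x in D1) f x <= \int[mu]_(x in D2) g x.
Proof.
move=> f0 g0 fg; rewrite !ge0_integralE//.
apply: ereal_sup_le => _ [h hf <-]; exists h => //= x.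
apply: le_trans (hf x) _.
rewrite /patch; case: ifPn => [/set_mem D1x|_].
  by have [D2x fgx] := fg x D1x; rewrite ifT ?inE.
by case: ifPn => // /set_mem /g0.
Qed.

Lemma nn_bound_integral (phi : T -> \bar R) (M : R) :
  (0 <= M)%R -> mu setT < +oo -> (forall x, 0 <= phi x <= M%:E) ->
  \int[mu]_(x in setT) phi x \is a fin_num.
Proof.
move=> M0 muT phiM.
have h0 : 0 <= \int[mu]_(x in setT) phi x by apply: integral_ge0 => x _; case/andP: (phiM x).
have h1 : \int[mu]_(x in setT) phi x <= \int[mu]_(x in setT) (cst M%:E) x.
  apply: nn_le_integral => x _; first by case/andP: (phiM x).
    by rewrite lee_fin.
  by split => //; case/andP: (phiM x).
rewrite integral_cst // in h1.
rewrite ge0_fin_numE //; apply: le_lt_trans h1 _.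
rewrite lte_mul_pinfty // ?lee_fin //.
Qed.

Lemma R_le_integral (f g : T -> R) (M : R) :
  (0 <= M)%R -> mu setT < +oo -> (forall x, (f x <= g x)%R) ->
  (forall x, (`|f x| <= M)%R) -> (forall x, (`|g x| <= M)%R) ->
  (Rintegral mu setT f <= Rintegral mu setT g)%R.
Proof.
move=> M0 muT fg fM gM.
have posb (h : T -> R) : (forall x, (`|h x| <= M)%R) ->
   \int[mu]_(x in setT) ((fun x => (h x)%:E)^\+ x) \is a fin_num /\
   \int[mu]_(x in setT) ((fun x => (h x)%:E)^\- x) \is a fin_num.
  move=> hM; split; apply: (@nn_bound_integral _ M) => // x.
    rewrite funeposE le_max lexx orbT /= ge_max lee_fin (le_trans (ler_norm _) (hM x)) /=.
    by rewrite lee_fin.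
  rewrite funenegE le_max lexx orbT /= ge_max !lee_fin M0 andbT.
  by move: (hM x); rewrite ler_norml lerNl => /andP[].
have [fp fn] := posb _ fM; have [gp gn] := posb _ gM.
rewrite /Rintegral (integralE _ _ (fun x => (f x)%:E)) (integralE _ _ (fun x => (g x)%:E)).
set a := \int[mu]_(x in setT) ((fun x => (f x)%:E)^\+ x) in fp *.
set b := \int[mu]_(x in setT) ((fun x => (f x)%:E)^\- x) in fn *.
set c := \int[mu]_(x in setT) ((fun x => (g x)%:E)^\+ x) in gp *.
set e := \int[mu]_(x in setT) ((fun x => (g x)%:E)^\- x) in gn *.
have ac : a <= c.
  apply: nn_le_integral => x _; rewrite ?funeposE.
  - by rewrite le_max lexx orbT.
  - by rewrite le_max lexx orbT.
  - by split => //; apply: le_max2 => //; rewrite lee_fin.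
have eb : e <= b.
  apply: nn_le_integral => x _; rewrite ?funenegE.
  - by rewrite le_max lexx orbT.
  - by rewrite le_max lexx orbT.
  - by split => //; apply: le_max2 => //; rewrite lee_fin lerN2.
rewrite -(fineK fp) -(fineK fn) -(fineK gp) -(fineK gn) -!EFinB /=.
rewrite -(fineK fp) -(fineK gp) lee_fin in ac.
rewrite -(fineK fn) -(fineK gn) lee_fin in eb.
by rewrite lerB.
Qed.

Lemma R_nn_le (D1 D2 : set T) (f g : T -> R) :
  (forall x, D1 x -> (0 <= f x)%R) -> (forall x, D2 x -> (0 <= g x)%R) ->
  (forall x, D1 x -> D2 x /\ (f x <= g x)%R) ->
  \int[mu]_(x in D2) (g x)%:E \is a fin_num ->
  (0 <= Rintegral mu D1 f)%R /\ (Rintegral mu D1 f <= Rintegral mu D2 g)%R.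
Proof.
move=> f0 g0 fg gfin.
have H : \int[mu]_(x in D1) (f x)%:E <= \int[mu]_(x in D2) (g x)%:E.
  apply: nn_le_integral => x Dx; rewrite ?lee_fin; [exact: f0|exact: g0|].
  by have [? ?] := fg x Dx; split; rewrite ?lee_fin.
have H0 : 0 <= \int[mu]_(x in D1) (f x)%:E by apply: integral_ge0 => x /f0; rewrite lee_fin.
have G0 : 0 <= \int[mu]_(x in D2) (g x)%:E by apply: integral_ge0 => x /g0; rewrite lee_fin.
have ffin : \int[mu]_(x in D1) (f x)%:E \is a fin_num.
  rewrite ge0_fin_numE //; apply: le_lt_trans H _.
  by rewrite -ge0_fin_numE.
split; first exact: fine_ge0.
exact: fine_le.
Qed.
End Aux.


  
Section Exp.
Context {R : realType}.
Local Open Scope ereal_scope.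

Lemma solve_mul (r : R) (X : \bar R) (Y : R) : (0 < r)%R -> 0 <= X -> r%:E * X = Y%:E ->
  X = (Y / r)%:E.
Proof.
move=> r0; case: X => [x| |] //= _.
  by rewrite -EFinM => -[<-]; congr EFin; field; rewrite gt_eqF.
by rewrite gt0_muley // lte_fin.
Qed.

Lemma meas_e (r : R) (D : set R) : measurable_fun D (EFin \o (fun t : R => expR (- (r * t)))).
Proof.
apply/measurable_realfun.measurable_EFinP; apply: measurable_funTS.
apply: measurable_realfun.continuous_measurable_fun => x.
apply: continuous_comp; last exact: continuous_expR.
by apply: continuousN; apply: continuousM => //; apply: cst_continuous.
Qed.

Lemma int_e (r : R) : (0 < r)%R ->
  \int[lebesgue_measure]_(t in `[0%R, +oo[) (expR (- (r * t)))%:E = (r^-1)%:E.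
Proof.
move=> r0.
have H := integral_exponential_pdf r0.
rewrite (_ : (\int[lebesgue_measure]_x (exponential_pdf r x)%:E) =
   \int[lebesgue_measure]_(x in `[0%R, +oo[) (r * expR (- (r * x)))%:E) in H; last first.
  rewrite [RHS]integral_mkcond; apply: eq_integral => x _.
  rewrite /exponential_pdf /patch; case: ifPn => // _.
  by rewrite mulNr.
rewrite (_ : \int[lebesgue_measure]_(x in `[0%R, +oo[) (r * expR (- (r * x)))%:E =
   r%:E * \int[lebesgue_measure]_(x in `[0%R, +oo[) (expR (- (r * x)))%:E) in H; last first.
  under eq_integral do rewrite EFinM.
  apply: ge0_integralZl; [by []|exact: meas_e|by move=> x _; rewrite lee_fin expR_ge0|by rewrite lee_fin ltW].
rewrite (solve_mul _ _ _ r0 _ H) ?mul1r //.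
by apply: integral_ge0 => x _; rewrite lee_fin expR_ge0.
Qed.

Lemma int_e_T (r T : R) : (0 < r)%R -> (0 < T)%R ->
  \int[lebesgue_measure]_(t in `[0%R, T]) (expR (- (r * t)))%:E
   = ((1 - expR (- (r * T))) / r)%:E.
Proof.
move=> r0 T0.
have H := exponential_prob_itv0c r T0.
rewrite /exponential_prob in H.
rewrite (_ : (\int[lebesgue_measure]_(x in `[0%R, T]) (exponential_pdf r x)%:E) =
   \int[lebesgue_measure]_(x in `[0%R, T]) (r * expR (- (r * x)))%:E) in H; last first.
  apply: eq_integral => x; rewrite inE /= in_itv /= => /andP[x0 _].
  by rewrite exponential_pdfE // mulNr.
rewrite (_ : \int[lebesgue_measure]_(x in `[0%R, T]) (r * expR (- (r * x)))%:E =
   r%:E * \int[lebesgue_measure]_(x in `[0%R, T]) (expR (- (r * x)))%:E) in H; last first.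
  under eq_integral do rewrite EFinM.
  apply: ge0_integralZl; [by []|exact: meas_e|by move=> x _; rewrite lee_fin expR_ge0|by rewrite lee_fin ltW].
rewrite -EFinB mulNr in H.
rewrite (solve_mul _ _ _ r0 _ H) //.
by apply: integral_ge0 => x _; rewrite lee_fin expR_ge0.
Qed.
End Exp.

Section Good.
Context {R : realType} {dO : measure_display} {Omega : measurableType dO}.
Variable P : probability Omega R.

Lemma good_event (W : R -> Omega -> R) (mu sigma T eps : R) :
  (forall w, {within `[0%R, +oo[%classic, continuous (fun t => W t w)}) ->
  (forall t, 0 <= t -> measurable_fun setT (W t)) ->
  0 < sigma -> 0 <= T -> 0 < eps ->
  exists (A : set Omega) (K : R), [/\ measurable A, ((1 - eps)%:E <= P A)%E &
    forall w, A w -> forall t, 0 <= t -> t <= T -> mu * t + sigma * W t w <= K].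
Proof.
move=> Wc Wm s0 T0 e0.
pose q (k m : nat) : R := k%:R / m.+1%:R.
have q0 k m : 0 <= q k m by rewrite /q divr_ge0.
pose B (n : nat) : set Omega := \bigcap_m \bigcap_k
   (if q k m <= T then W (q k m) @^-1` `]-oo, (n%:R - mu * q k m) / sigma]%classic else setT).
have mB n : measurable (B n).
  apply: bigcapT_measurable => m; apply: bigcapT_measurable => k.
  case: ifPn => _ //.
  have := Wm _ (q0 k m) measurableT _ (measurable_itv `]-oo, (n%:R - mu * q k m) / sigma]).
  by rewrite setTI.
have Bq n w k m : B n w -> q k m <= T -> mu * q k m + sigma * W (q k m) w <= n%:R.
  move=> /(_ m I) /(_ k I); rewrite /= => + qT; rewrite qT /= in_itv /= ler_pdivlMr //.
  move=> h; lra.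
have ndB : {homo B : n m / (n <= m)%N >-> (n <= m)%O}.
  move=> n n' nn'; apply/subsetPset => w Bw m _ k _.
  have := Bw m I k I; rewrite /=; case: ifPn => // _; rewrite /= !in_itv /= => h.
  apply: le_trans h _; rewrite ler_pM2r ?invr_gt0 // lerD2r ler_nat //.
have gc w : {within `[0, T]%classic, continuous (fun t => mu * t + sigma * W t w)}.
  apply/subspace_continuousP => x /=; rewrite in_itv /= => /andP[x0 xT].
  apply: cvgD.
    apply: cvg_within_filter; apply: cvgMl_tmp; exact: cvg_id.
  apply: cvgMl_tmp.
  have sub : `[0, T]%classic `<=` `[0%R, +oo[%classic.
    by move=> y /=; rewrite !in_itv /= => /andP[-> _].
  have := continuous_subspaceW sub (Wc w).
  move/subspace_continuousP => /(_ x); apply => /=.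
  by rewrite in_itv /= x0 xT.
have cupB : \bigcup_n B n = setT.
  apply/seteqP; split => // w _.
  have [c cT cmax] := EVT_max T0 (gc w).
  exists (Num.truncn (mu * c + sigma * W c w)).+1 => //= m _ k _.
  case: ifPn => // qT; rewrite /= in_itv /= ler_pdivlMr //.
  have := cmax (q k m); rewrite in_itv /= q0 qT => /(_ isT) h.
  have := truncnS_gt (mu * c + sigma * W c w).
  move=> h2; lra.
have cvgB := @nondecreasing_cvg_mu _ _ _ P B mB (bigcupT_measurable B mB) ndB.
rewrite cupB in cvgB.
have ndPB : nondecreasing_seq (P \o B).
  move=> n n' nn'; apply: le_measure; rewrite ?inE //.
  exact/subsetPset/ndB.
have lim1 : ((1 - eps)%:E < limn (P \o B))%E.
  rewrite (cvg_lim _ cvgB) //.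
  apply: (@lt_le_trans _ _ 1%E); first by rewrite lte_fin; lra.
  by rewrite le_eqVlt; apply/orP; left; apply/eqP; apply: esym; exact: (probability_setT P).
have [N _ HN] := lte_lim ndPB (cvgP _ cvgB) lim1.
exists (B N), N%:R; split; [exact: mB | exact: (HN N (leqnn N)) | ].
move=> w Bw t t0 tT.
rewrite leNgt; apply/negP => Ngt.
have tA : `[0, T]%classic t by rewrite /= in_itv /= t0 tT.
move: (gc w) => /subspace_continuousP /(_ t tA) /cvgr_gt /(_ _ Ngt).
move=> /nbhs_ballP [δ /= δ0 Hδ].
pose m := Num.truncn δ^-1.
pose k := Num.truncn (t * m.+1%:R).
have M0 : 0 < m.+1%:R :> R by rewrite ltr0n.
have h1 : k%:R <= t * m.+1%:R by rewrite truncn_le mulr_ge0 // ltW.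
have h2 : t * m.+1%:R < k.+1%:R by exact: truncnS_gt.
have h3 : δ^-1 < m.+1%:R by exact: truncnS_gt.
have dd : δ * δ^-1 = 1 by rewrite mulfV // gt_eqF.
have sq : q k m * m.+1%:R = k%:R by rewrite /q divfK // pnatr_eq0.
rewrite -/(q k m) in sq.
have qt : q k m <= t by rewrite -(ler_pM2r M0) sq.
have h4 : 1 < δ * m.+1%:R by rewrite -[X in X < _]dd (ltr_pM2l δ0).
have tq : t - q k m < δ.
  rewrite -(ltr_pM2r M0) mulrBl sq; rewrite -natr1 in h2; lra.
have hb : ball t δ (q k m).
  by rewrite -ball_normE /ball_ /= ger0_norm ?subr_ge0.
have qT : q k m <= T by exact: le_trans qt tT.
have := Hδ _ hb; rewrite /= in_itv /= q0 qT => /(_ isT) h.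
move: h; rewrite /from_subspace /= => h; have := Bq N w k m Bw qT; lra.
Qed.
End Good.

Section Main.
Context {R : realType} {dO : measure_display} {Omega : measurableType dO}.
Variable P : probability Omega R.
Local Notation leb := (@lebesgue_measure R).

Lemma int_e_c (r c : R) : 0 < r -> 0 <= c ->
  (\int[leb]_(t in `[0%R, +oo[%classic) (expR (- (r * t)) * c)%:E = (c / r)%:E)%E.
Proof.
move=> r0 c0.
under eq_integral do rewrite EFinM muleC.
rewrite ge0_integralZl //; try exact: meas_e;
  try (by move=> x _; rewrite lee_fin expR_ge0); try (by rewrite lee_fin).
by rewrite int_e // -EFinM.
Qed.

Lemma fin_I2 (r : R) (h : R -> R) : 0 < r -> (forall t, 0 <= h t <= 1) ->
  (\int[leb]_(t in `[0%R, +oo[%classic) (expR (- (r * t)) * h t)%:E)%E \is a fin_num.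
Proof.
move=> r0 h01.
have H0 : (0 <= \int[leb]_(t in `[0%R, +oo[%classic) (expR (- (r * t)) * h t)%:E)%E.
  apply: integral_ge0 => x _; rewrite lee_fin mulr_ge0 ?expR_ge0 //.
  by case/andP: (h01 x).
rewrite ge0_fin_numE //.
apply: (@le_lt_trans _ _ (\int[leb]_(t in `[0%R, +oo[%classic) (expR (- (r * t)))%:E)%E).
  apply: nn_le_integral => x Dx.
  - by rewrite lee_fin mulr_ge0 ?expR_ge0 //; case/andP: (h01 x).
  - by rewrite lee_fin expR_ge0.
  - split => //; rewrite lee_fin -[X in (_ <= X)%R]mulr1 ler_wpM2l ?expR_ge0 //.
    by case/andP: (h01 x).
by rewrite int_e // ltry.
Qed.

Lemma I1_bd (r u0 : R) (V : R -> R) : 0 < r -> 0 <= u0 ->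
  (forall t, 0 <= t -> 0 <= V t <= u0) ->
  0 <= Rintegral leb `[0%R, +oo[%classic (fun t => expR (- (r * t)) * V t) <= u0 / r.
Proof.
move=> r0 u00 Vb.
have := @R_nn_le _ _ _ leb `[0%R, +oo[%classic `[0%R, +oo[%classic
   (fun t => expR (- (r * t)) * V t) (fun t => expR (- (r * t)) * u0).
rewrite {2}/Rintegral int_e_c //=; case.
- move=> x; rewrite /= in_itv /= andbT => x0.
  by rewrite mulr_ge0 ?expR_ge0 //; case/andP: (Vb x x0).
- by move=> x _; rewrite mulr_ge0 ?expR_ge0.
- move=> x Dx; have := Dx; rewrite /= in_itv /= andbT => x0; split => //.
  by rewrite ler_wpM2l ?expR_ge0 //; case/andP: (Vb x x0).
- by [].
move=> h1 h2; rewrite h1 /=; apply: (le_trans h2); rewrite /Rintegral ?int_e_c //.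
Qed.

Lemma I2_bd (r : R) (h : R -> R) : 0 < r -> (forall t, 0 <= h t <= 1) ->
  0 <= Rintegral leb `[0%R, +oo[%classic (fun t => expR (- (r * t)) * h t) <= r^-1.
Proof.
move=> r0 h01.
have := @I1_bd r 1 h r0 ler01 (fun t _ => h01 t).
by rewrite div1r.
Qed.

Lemma I2_mono (r : R) (h1 h2 : R -> R) : 0 < r -> (forall t, 0 <= h1 t <= h2 t) ->
  (forall t, h2 t <= 1) ->
  Rintegral leb `[0%R, +oo[%classic (fun t => expR (- (r * t)) * h1 t) <=
  Rintegral leb `[0%R, +oo[%classic (fun t => expR (- (r * t)) * h2 t).
Proof.
move=> r0 h12 h21.
have h2b t : 0 <= h2 t <= 1 by rewrite h21 andbT; case/andP: (h12 t) => a b; exact: le_trans a b.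
have := @R_nn_le _ _ _ leb `[0%R, +oo[%classic `[0%R, +oo[%classic
   (fun t => expR (- (r * t)) * h1 t) (fun t => expR (- (r * t)) * h2 t).
case => //.
- by move=> x _; rewrite mulr_ge0 ?expR_ge0 //; case/andP: (h12 x).
- by move=> x _; rewrite mulr_ge0 ?expR_ge0 //; case/andP: (h2b x).
- by move=> x Dx; split => //; rewrite ler_wpM2l ?expR_ge0 //; case/andP: (h12 x).
- exact: fin_I2.
Qed.

Lemma I2_low (r T : R) (h : R -> R) : 0 < r -> 0 < T -> (forall t, 0 <= h t <= 1) ->
  (forall t, 0 <= t -> t <= T -> h t = 1) ->
  (1 - expR (- (r * T))) / r <=
  Rintegral leb `[0%R, +oo[%classic (fun t => expR (- (r * t)) * h t).
Proof.
move=> r0 T0 h01 h1.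
have := @R_nn_le _ _ _ leb `[0, T]%classic `[0%R, +oo[%classic
   (fun t => expR (- (r * t))) (fun t => expR (- (r * t)) * h t).
case.
- by move=> x _; rewrite expR_ge0.
- by move=> x _; rewrite mulr_ge0 ?expR_ge0 //; case/andP: (h01 x).
- move=> x Dx; have := Dx; rewrite /= in_itv /= => /andP[x0 xT]; split.
    by rewrite /= in_itv /= x0.
  by rewrite h1 // mulr1.
- exact: fin_I2.
by move=> _; rewrite {1}/Rintegral int_e_T.
Qed.
End Main.

Section Main2.
Context {R : realType} {dO : measure_display} {Omega : measurableType dO}.
Variable P : probability Omega R.
Local Notation leb := (@lebesgue_measure R).
Variables (W : R -> Omega -> R) (mu sigma u0 r beta d : R).
Hypotheses (r0 : 0 < r) (u00 : 0 < u0) (b0 : 0 < beta).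

Definition ind (U : R -> Omega -> R) (z : R) (w : Omega) (t : R) : R :=
  if d < drawdown W mu sigma U z t w then 1 else 0.

Lemma ind01 U z w t : 0 <= ind U z w t <= 1.
Proof. by rewrite /ind; case: ifP => _; apply/andP; split; lra. Qed.

Lemma dd_mono U z1 z2 t w : z1 <= z2 ->
  drawdown W mu sigma U z1 t w <= drawdown W mu sigma U z2 t w.
Proof. by move=> z12; rewrite /drawdown /running_max lerD2r; exact: le_max2. Qed.

Lemma ind_mono U z1 z2 w t : z1 <= z2 -> ind U z1 w t <= ind U z2 w t.
Proof.
move=> z12; rewrite /ind; case: ifPn => h1; case: ifPn => h2 //; try lra.
by rewrite (lt_le_trans h1 (dd_mono U z1 z2 t w z12)) in h2.
Qed.

Definition adm (U : R -> Omega -> R) := forall t w, 0 <= t -> 0 <= U t w <= u0.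

Definition fU U z w := beta * Rintegral leb `[0%R, +oo[%classic (fun t => expR (- (r * t)) * U t w)
    - Rintegral leb `[0%R, +oo[%classic (fun t => expR (- (r * t)) * ind U z w t).

Lemma perf_eq U z : performance P W mu sigma r beta d U z = Rintegral P setT (fU U z).
Proof. by []. Qed.

Lemma fU_bd U z w : adm U -> - r^-1 <= fU U z w <= beta * u0 / r.
Proof.
move=> aU.
have /andP[i1 i2] := @I1_bd R r u0 (fun t => U t w) r0 (ltW u00) (fun t t0 => aU t w t0).
have /andP[j1 j2] := @I2_bd R r (ind U z w) r0 (ind01 U z w).
have k1 : beta * Rintegral leb `[0%R, +oo[%classic (fun t => expR (- (r * t)) * U t w) <= beta * (u0 / r).
  by rewrite ler_wpM2l // ltW.
have k0 : 0 <= beta * Rintegral leb `[0%R, +oo[%classic (fun t => expR (- (r * t)) * U t w).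
  by rewrite mulr_ge0 // ltW.
rewrite /fU mulrA in k1 *; apply/andP; split; lra.
Qed.

Lemma PT : (P setT < +oo)%E.
Proof. by rewrite [X in (X < _)%E](probability_setT P) ltry. Qed.

Lemma RintP_cst c : Rintegral P setT (fun _ => c) = c.
Proof. by rewrite Rintegral_cst // [X in fine X](probability_setT P) mulr1. Qed.

Lemma perf_ub U z : adm U -> performance P W mu sigma r beta d U z <= beta * u0 / r.
Proof.
move=> aU; rewrite perf_eq -[X in _ <= X](RintP_cst (beta * u0 / r)).
have bur : 0 <= beta * u0 / r.
  by apply: divr_ge0; [apply: mulr_ge0; exact: ltW | exact: ltW].
have ri : 0 <= r^-1 by rewrite invr_ge0 ltW.
apply: (@R_le_integral _ _ _ P _ _ (beta * u0 / r + r^-1)).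
- lra.
- exact: PT.
- by move=> w; case/andP: (fU_bd U z w aU).
- move=> w; case/andP: (fU_bd U z w aU) => h1 h2; rewrite ler_norml; apply/andP; split; lra.
- move=> w; rewrite ger0_norm //; lra.
Qed.

Lemma adm_cst : adm (fun _ _ => u0).
Proof. by move=> t w _; rewrite lexx ltW. Qed.

Lemma perf_lb z : (beta * u0 - 1) / r <= performance P W mu sigma r beta d (fun _ _ => u0) z.
Proof.
rewrite perf_eq -[X in X <= _](RintP_cst ((beta * u0 - 1) / r)).
have bur : 0 <= beta * u0 / r.
  by apply: divr_ge0; [apply: mulr_ge0; exact: ltW | exact: ltW].
have ri : 0 <= r^-1 by rewrite invr_ge0 ltW.
have e1 : (beta * u0 - 1) / r = beta * u0 / r - r^-1 by rewrite mulrBl div1r.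
apply: (@R_le_integral _ _ _ P _ _ (beta * u0 / r + r^-1)).
- lra.
- exact: PT.
- move=> w; rewrite /fU.
  have -> : Rintegral leb `[0%R, +oo[%classic (fun t => expR (- (r * t)) * u0) = u0 / r.
    by rewrite /Rintegral int_e_c // ltW.
  have /andP[j1 j2] := @I2_bd R r (ind (fun _ _ => u0) z w) r0 (ind01 _ z w).
  rewrite e1 mulrA; lra.
- move=> w; rewrite e1 ler_norml; apply/andP; split; lra.
- move=> w; case/andP: (fU_bd _ z w adm_cst) => h1 h2; rewrite ler_norml; apply/andP; split; lra.
Qed.

Lemma perf_mono U z1 z2 : adm U -> z1 <= z2 ->
  performance P W mu sigma r beta d U z2 <= performance P W mu sigma r beta d U z1.
Proof.
move=> aU z12; rewrite !perf_eq.
have bur : 0 <= beta * u0 / r.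
  by apply: divr_ge0; [apply: mulr_ge0; exact: ltW | exact: ltW].
have ri : 0 <= r^-1 by rewrite invr_ge0 ltW.
apply: (@R_le_integral _ _ _ P _ _ (beta * u0 / r + r^-1)).
- lra.
- exact: PT.
- move=> w; rewrite /fU lerD2l lerN2; apply: I2_mono => // t.
    by rewrite ind_mono // andbT; case/andP: (ind01 U z1 w t).
  by case/andP: (ind01 U z2 w t).
- move=> w; case/andP: (fU_bd U z2 w aU) => h1 h2; rewrite ler_norml; apply/andP; split; lra.
- move=> w; case/andP: (fU_bd U z1 w aU) => h1 h2; rewrite ler_norml; apply/andP; split; lra.
Qed.

Lemma perf_good U z T (A : set Omega) K : adm U -> 0 < T -> measurable A ->
  (forall w, A w -> forall t, 0 <= t -> t <= T -> mu * t + sigma * W t w <= K) ->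
  K + d < z ->
  performance P W mu sigma r beta d U z <=
    beta * u0 / r - (1 - expR (- (r * T))) / r * fine (P A).
Proof.
move=> aU T0 mA AK Kz; rewrite perf_eq.
have [c cdef] : exists c, c = (1 - expR (- (r * T))) / r by eexists.
rewrite -cdef.
have bur : 0 <= beta * u0 / r.
  by apply: divr_ge0; [apply: mulr_ge0; exact: ltW | exact: ltW].
have ri : 0 <= r^-1 by rewrite invr_ge0 ltW.
have eT1 : expR (- (r * T)) <= 1 by rewrite expR_le1 oppr_le0 mulr_ge0 // ltW.
have c0 : 0 <= c by rewrite cdef divr_ge0 ?subr_ge0 // ltW.
have cr : c <= r^-1.
  rewrite cdef -[X in _ <= X]div1r ler_pM2r ?invr_gt0 // gerBl expR_ge0.
have gI : Rintegral P setT (fun w => beta * u0 / r - c * (\1_A w : R)) =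
    beta * u0 / r - c * fine (P A).
  rewrite (@RintegralB _ _ _ P setT (fun _ => beta * u0 / r) (fun w => c * (\1_A w : R))) //.
  - rewrite RintP_cst RintegralZl //; last exact: integrable_indic.
    by rewrite /Rintegral integral_indic // setIT.
  - exact: finite_measure_integrable_cst.
  - exact: (integrableZl measurableT c (integrable_indic P mA)).
rewrite -gI.
apply: (@R_le_integral _ _ _ P _ _ (beta * u0 / r + r^-1)).
- lra.
- exact: PT.
- move=> w; rewrite indicE; case: (boolP (w \in A)) => wA; last first.
    by rewrite mulr0 subr0; case/andP: (fU_bd U z w aU).
  rewrite mulr1 /fU.
  have /andP[i1 i2] := @I1_bd R r u0 (fun t => U t w) r0 (ltW u00) (fun t t0 => aU t w t0).
  have k1 : beta * Rintegral leb `[0%R, +oo[%classic (fun t => expR (- (r * t)) * U t w) <= beta * (u0 / r).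
    by rewrite ler_wpM2l // ltW.
  have low := @I2_low R r T (ind U z w) r0 T0 (ind01 U z w).
  have : c <= Rintegral leb `[0%R, +oo[%classic (fun t => expR (- (r * t)) * ind U z w t).
    rewrite cdef; apply: low => t t0 tT; rewrite /ind ifT //.
    have hK := AK w (set_mem wA) t t0 tT.
    have hm : z <= running_max W mu sigma U z t w by rewrite /running_max le_max lexx.
    rewrite /drawdown /surplus.
    set RI := (X in _ - (_ - X)).
    have hI : 0 <= RI.
      rewrite /RI; apply: fine_ge0; apply: integral_ge0 => s; rewrite /= in_itv /= => /andP[s0 _].
      by rewrite lee_fin; case/andP: (aU s w s0).
    move: hm hI hK Kz; clearbody RI.
    generalize (running_max W mu sigma U z t w) (W t w) => RM Wt *; lra.
  rewrite mulrA in k1; lra.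
- move=> w; case/andP: (fU_bd U z w aU) => h1 h2; rewrite ler_norml; apply/andP; split; lra.
- move=> w; rewrite indicE; case: (w \in A); rewrite ?mulr1 ?mulr0 ler_norml; apply/andP; split; lra.
Qed.
End Main2.

Theorem lemma1p1 (R : realType) (dO : measure_display) (Omega : measurableType dO)
    (P : probability Omega R) (W : R -> Omega -> R)
    (mu sigma u0 r beta d : R) :
  measure_is_complete P ->
  std_brownian_motion P W ->
  0 < sigma -> 0 < u0 -> 0 < r -> 0 < beta -> 0 < d ->
  let v := value_fn P W mu sigma u0 r beta d in
  [/\ (forall z1 z2, 0 <= z1 -> z1 <= z2 -> v z2 <= v z1),
      (forall z, 0 <= z -> (beta * u0 - 1) / r <= v z <= beta * u0 / r) &
      v z @[z --> +oo] --> (beta * u0 - 1) / r].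
Proof.
move=> _ BM s0 u00 r0 b0 d0 v.
case: BM => _ Wc Wm _ _.
have adm_of U : admissible P W u0 U -> adm u0 U.
  by case => h _ _ t w t0; exact: h.
have adm_c : admissible P W u0 (fun _ _ => u0).
  split.
  - by move=> t w _; rewrite lexx ltW.
  - move=> t t0 B mB; rewrite preimage_cst.
    have [h0 hC _] := smallest_sigma_algebra setT
      ([set A | exists s (B : set R), [/\ 0 <= s <= t, measurable B & A = W s @^-1` B]]
       `|` [set N | exists M, [/\ measurable M, P M = 0%E & N `<=` M]]).
    case: ifP => _; last exact: h0.
    by have := hC set0 h0; rewrite setD0.
  - exact: measurable_cst.
pose S z := [set performance P W mu sigma r beta d U z | U in admissible P W u0].
have Sne z : S z !=set0.
  by exists (performance P W mu sigma r beta d (fun _ _ => u0) z); exists (fun _ _ => u0).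
have Sub z : ubound (S z) (beta * u0 / r).
  by move=> _ [U aU <-]; exact: (perf_ub P W mu sigma u0 r beta d r0 u00 b0 U z (adm_of U aU)).
have hasub z : has_ubound (S z) by exists (beta * u0 / r); exact: Sub.
have vE z : v z = sup (S z) by [].
have vub z : v z <= beta * u0 / r by rewrite vE; exact: ge_sup (Sne z) (Sub z).
have vlb z : (beta * u0 - 1) / r <= v z.
  apply: le_trans (perf_lb P W mu sigma u0 r beta d r0 u00 b0 z) _.
  by rewrite vE; apply: ub_le_sup (hasub z) _ _; exists (fun _ _ => u0).
split.
- move=> z1 z2 _ z12; rewrite (vE z2); apply: ge_sup (Sne z2) _.
  move=> _ [U aU <-]; apply: le_trans (perf_mono P W mu sigma u0 r beta d r0 u00 b0 U z1 z2 (adm_of U aU) z12) _.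
  by rewrite vE; apply: ub_le_sup (hasub z1) _ _; exists U.
- by move=> z _; rewrite vlb vub.
apply/cvgrPdist_le => eps e0.
pose δ := Num.min (eps * r / 2) (1 / 2).
have δ0 : 0 < δ.
  by rewrite lt_min; apply/andP; split; [rewrite divr_gt0 // mulr_gt0 | rewrite divr_gt0].
have δh : δ <= 1 / 2 by rewrite ge_min lexx orbT.
have δe : δ <= eps * r / 2 by rewrite ge_min lexx.
have δ1 : 1 < δ^-1 by rewrite invf_gt1 //; lra.
pose T := ln (δ^-1) / r.
have T0 : 0 < T by rewrite divr_gt0 // ln_gt0.
have eT : expR (- (r * T)) = δ.
  rewrite /T mulrC divfK ?gt_eqF // expRN lnK ?invrK //.
  by rewrite posrE invr_gt0.
have [A [K [mA PA AK]]] := good_event P W mu sigma T δ Wc Wm s0 (ltW T0) δ0.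
have Afin : P A \is a fin_num by rewrite fin_num_measure.
have pA : 1 - δ <= fine (P A) by rewrite -lee_fin fineK.
have vz z : K + d < z -> v z <= beta * u0 / r - (1 - δ) / r * fine (P A).
  move=> Kz; rewrite vE; apply: ge_sup (Sne z) _ => _ [U aU <-].
  rewrite -eT.
  exact: (perf_good P W mu sigma u0 r beta d r0 u00 b0 U z T A K (adm_of U aU) T0 mA AK Kz).
exists (Num.max (K + d) 0); split; first exact: num_real.
move=> z; rewrite gt_max => /andP[Kz z0].
have h1 := vz z Kz; have h2 := vlb z.
rewrite distrC ger0_norm ?subr_ge0 //.
have ri0 : 0 < r^-1 by rewrite invr_gt0.
have k1 : (1 - δ) * r^-1 * (1 - δ) <= (1 - δ) * r^-1 * fine (P A).
  by rewrite ler_wpM2l // mulr_ge0 // ?ltW //; lra.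
have k2 : 2 * δ * r^-1 <= eps.
  have : 2 * δ <= eps * r by lra.
  move=> h; have := ler_wpM2r (ltW ri0) h; rewrite mulfK ?gt_eqF //.
have k3 : 0 <= δ * δ * r^-1 by rewrite mulr_ge0 // ?mulr_ge0 // ltW.
lra.
Qed.
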